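(* Let $U$ be a random variable on a finite alphabet $\mathcal{U}$ such that $X-Y-U$ is a Markov chain (i.e. $P_{XYU}=P_{XY}P_{U|Y}$), and for $\epsilon>0$ define $J_u=\frac{1}{\epsilon}(P_{X|U=u}-P_X)$ for each $u$ with $P_U(u)>0$, and suppose $\{J_u\}$ satisfies (P1), (P2), (P3). Then, for sufficiently small $\epsilon>0$, for every such $u$ the vector $P_{Y|U=u}$ belongs to the convex polytope $\mathbb{S}_u=\{y\in\mathbb{R}^{|\mathcal{Y}|}: My=MP_Y+\epsilon M\begin{bmatrix}P_{X|Y_1}^{-1}J_u\\0\end{bmatrix},\ y\ge0\}$.
   Context: Setting: $X,Y$ on finite alphabets with $|\mathcal{X}|<|\mathcal{Y}|$, joint pmf $P_{XY}$, marginal vectors $P_X,P_Y$ with positive entries. $P_{X|Y}\in\mathbb{R}^{|\mathcal{X}|\times|\mathcal{Y}|}$ has full row rank and $P_{X|Y}=[P_{X|Y_1},P_{X|Y_2}]$ with $P_{X|Y_1}$ (first $|\mathcal{X}|$ columns) invertible. With an SVD $P_{X|Y}=U\Sigma V^T$, $V=[v_1,\dots,v_{|\mathcal{Y}|}]$, set $M=[v_1,\dots,v_{|\mathcal{X}|}]^T$. The zero block has size $|\mathcal{Y}|-|\mathcal{X}|$. Properties: (P1) $\sum_x J_u(x)=0$ for all $u$; (P2) $\sum_u P_U(u)J_u(x)=0$ for all $x$; (P3) $\sum_x|J_u(x)|\le1$ for all $u$. *)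

(* Defs.v *)
From HB Require Import structures.
From mathcomp Require Import all_boot all_order all_algebra.
Set Implicit Arguments. Unset Strict Implicit. Unset Printing Implicit Defensive.
Import Order.TTheory GRing.Theory Num.Theory.
Local Open Scope ring_scope.

(* Alphabets: X = 'I_n, Y = 'I_m, U = 'I_p.  Joint pmf P_XY as an n x m matrix. *)
Section Defs.
Variable R : realFieldType.

Definition is_joint_pmf n m (P : 'M[R]_(n, m)) : Prop :=
  (forall i j, 0 <= P i j) /\ \sum_i \sum_j P i j = 1.

Definition margX n m (P : 'M[R]_(n, m)) : 'cV[R]_n := \col_i \sum_j P i j.
Definition margY n m (P : 'M[R]_(n, m)) : 'cV[R]_m := \col_j \sum_i P i j.
Definition condXgY n m (P : 'M[R]_(n, m)) : 'M[R]_(n, m) :=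
  \matrix_(i, j) (P i j / margY P j 0).

Definition is_svd n m (A : 'M[R]_(n, m)) (U : 'M[R]_n) (S : 'M[R]_(n, m))
  (V : 'M[R]_m) : Prop :=
  [/\ U *m U^T = 1%:M /\ U^T *m U = 1%:M, V *m V^T = 1%:M /\ V^T *m V = 1%:M,
      (forall (i : 'I_n) (j : 'I_m), (i : nat) <> (j : nat) -> S i j = 0),
      (forall (i : 'I_n) (j : 'I_m), (i : nat) = (j : nat) -> 0 <= S i j)
    & A = U *m S *m V^T].

(* Joint pmf of (X,Y,U) as a function on X x Y x U. *)
Definition margU n m p (Q : 'I_n -> 'I_m -> 'I_p -> R) (u : 'I_p) : R :=
  \sum_x \sum_y Q x y u.
Definition margYU n m p (Q : 'I_n -> 'I_m -> 'I_p -> R) (y : 'I_m) (u : 'I_p) : R :=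
  \sum_x Q x y u.
Definition condXgU n m p (Q : 'I_n -> 'I_m -> 'I_p -> R) (u : 'I_p) : 'cV[R]_n :=
  \col_x ((\sum_y Q x y u) / margU Q u).
Definition condYgU n m p (Q : 'I_n -> 'I_m -> 'I_p -> R) (u : 'I_p) : 'cV[R]_m :=
  \col_y (margYU Q y u / margU Q u).

Definition markov_XYU n m p (P : 'M[R]_(n, m)) (Q : 'I_n -> 'I_m -> 'I_p -> R) : Prop :=
  [/\ (forall x y u, 0 <= Q x y u),
      (forall x y, \sum_u Q x y u = P x y)
    & (forall x y u, Q x y u = P x y * (margYU Q y u / margY P y 0))].

Definition Jvec n m p (P : 'M[R]_(n, m)) (Q : 'I_n -> 'I_m -> 'I_p -> R)
  (eps : R) (u : 'I_p) : 'cV[R]_n :=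
  eps^-1 *: (condXgU Q u - margX P).

Definition propP1 n p (PU : 'I_p -> R) (J : 'I_p -> 'cV[R]_n) : Prop :=
  forall u, 0 < PU u -> \sum_x J u x 0 = 0.
Definition propP2 n p (PU : 'I_p -> R) (J : 'I_p -> 'cV[R]_n) : Prop :=
  forall x, \sum_(u | 0 < PU u) PU u * J u x 0 = 0.
Definition propP3 n p (PU : 'I_p -> R) (J : 'I_p -> 'cV[R]_n) : Prop :=
  forall u, 0 < PU u -> \sum_x `|J u x 0| <= 1.

(* The polytope S_u = { y : M y = M P_Y + eps M [P1^{-1} J; 0], y >= 0 },
   |Y| = n + k, P1 = first n columns of P_{X|Y}. *)
Definition polytopeS n k (M : 'M[R]_(n, n + k)) (PY : 'cV[R]_(n + k))
  (P1 : 'M[R]_n) (eps : R) (J : 'cV[R]_n) : pred 'cV[R]_(n + k) :=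
  fun y => (M *m y == M *m PY + eps *: (M *m col_mx (invmx P1 *m J) (0 : 'cV[R]_k)))
           && [forall j, 0 <= y j 0].

End Defs.

(* Main.v *)
Require Import Defs.
From HB Require Import structures.
From mathcomp Require Import all_boot all_order all_algebra.
From mathcomp Require Import ring.
Import Order.TTheory GRing.Theory Num.Theory.
Local Open Scope ring_scope.

Lemma nullM (R : realFieldType) (n k : nat) (A : 'M[R]_(n, n + k))
  (Uo : 'M[R]_n) (Sg : 'M[R]_(n, n + k)) (V : 'M[R]_(n + k))
  (HU : Uo^T *m Uo = 1%:M)
  (HS : forall (i : 'I_n) (j : 'I_(n + k)), (i : nat) <> (j : nat) -> Sg i j = 0)
  (HA : A = Uo *m Sg *m V^T) (Hr : \rank A = n) (z : 'cV[R]_(n + k)) :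
  A *m z = 0 -> usubmx (V^T : 'M[R]_(n + k, n + k)) *m z = 0.
Proof.
move=> Az.
have Hfree : row_free A by rewrite -row_leq_rank Hr.
have Hd : forall i : 'I_n, Sg i (lshift k i) != 0.
  move=> i; apply/negP => /eqP H0.
  have Hrow : row i Sg = 0.
    apply/matrixP => a j; rewrite !mxE.
    have [Hij|Hij] := eqVneq (i : nat) (j : nat).
      have -> : j = lshift k i by apply: val_inj.
      exact: H0.
    by apply: HS; apply/eqP.
  have Hu : row i Uo^T *m A = 0 *m A.
    rewrite mul0mx HA -row_mul !mulmxA HU mul1mx. idtac.
    by rewrite row_mul Hrow mul0mx.
  have := row_free_inj Hfree Hu => Hz.
  have : row i (Uo^T *m Uo) = 0 by rewrite row_mul Hz mul0mx.
  rewrite HU => /matrixP /(_ 0 i); rewrite !mxE eqxx /=.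
  by move/eqP; rewrite oner_eq0.
set w := V^T *m z.
have Hw : Sg *m w = 0.
  have E : Sg *m V^T = Uo^T *m A by rewrite HA !mulmxA HU mul1mx.
  by rewrite /w mulmxA E -mulmxA Az mulmx0.
rewrite mul_usub_mx; apply/matrixP => i j.
have Hwi : w (lshift k i) 0 = 0.
  have := congr1 (fun B : 'cV[R]_n => B i 0) Hw; rewrite [in X in X -> _]mxE [in X in X -> _]mxE.
  rewrite (bigD1 (lshift k i)) //= big1 ?addr0.
    by move/eqP; rewrite mulf_eq0 (negbTE (Hd i)) /= => /eqP.
  move=> j' Hj'; rewrite HS ?mul0r //.
  move=> Heq; move: Hj'; suff -> : j' = lshift k i by rewrite eqxx.
  by apply: val_inj.
by rewrite (ord1 j) mxE Hwi mxE.
Qed.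

Theorem lemma2 (R : realFieldType) (n k : nat) (PXY : 'M[R]_(n, n + k))
  (Hn : (0 < n)%N) (Hk : (0 < k)%N)
  (Hpmf : is_joint_pmf PXY)
  (HPX : forall x, 0 < margX PXY x 0)
  (HPY : forall y, 0 < margY PXY y 0)
  (Hrank : \rank (condXgY PXY) = n)
  (HP1 : lsubmx (condXgY PXY) \in unitmx)
  (Uo : 'M[R]_n) (Sg : 'M[R]_(n, n + k)) (V : 'M[R]_(n + k))
  (Hsvd : is_svd (condXgY PXY) Uo Sg V) :
  let M : 'M[R]_(n, n + k) := usubmx (V^T : 'M[R]_(n + k, n + k)) in
  exists eps0 : R, 0 < eps0 /\
    forall eps : R, 0 < eps -> eps < eps0 ->
    forall (p : nat) (Q : 'I_n -> 'I_(n + k) -> 'I_p -> R),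
      markov_XYU PXY Q ->
      propP1 (margU Q) (Jvec PXY Q eps) ->
      propP2 (margU Q) (Jvec PXY Q eps) ->
      propP3 (margU Q) (Jvec PXY Q eps) ->
      forall u : 'I_p, 0 < margU Q u ->
        polytopeS M (margY PXY) (lsubmx (condXgY PXY)) eps (Jvec PXY Q eps u)
          (condYgU Q u).
Proof.
move=> M; exists 1; split => // eps he _ p Q [Q0 QP QM] _ _ _ u hu.
have [[_ HU] [_ _] HS _ HA] := Hsvd.
set A := condXgY PXY.
set y := condYgU Q u.
set J := Jvec PXY Q eps u.
set c := col_mx (invmx (lsubmx A) *m J) (0 : 'cV[R]_k).
have Ay : A *m y = condXgU Q u.
  apply/matrixP => x j; rewrite (ord1 j) !mxE mulr_suml; apply: eq_bigr => j' _.
  rewrite !mxE QM; have := HPY j'; rewrite /margYU mxE; move=> _; ring.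
have APY : A *m margY PXY = margX PXY.
  apply/matrixP => x j; rewrite (ord1 j) !mxE; apply: eq_bigr => j' _.
  rewrite !mxE divfK //; have := HPY j'; rewrite mxE => h; by rewrite gt_eqF.
have Ac : A *m c = J.
  by rewrite /c -[A]hsubmxK mul_row_col mulmx0 addr0 row_mxKl mulKVmx.
have EJ : eps *: J = condXgU Q u - margX PXY.
  by rewrite /J /Jvec scalerA mulfV ?gt_eqF // scale1r.
have Az : A *m (y - margY PXY - eps *: c) = 0.
  by rewrite !mulmxBr -scalemxAr Ay APY Ac EJ subrr.
have := @nullM _ _ _ _ _ _ _ HU HS HA Hrank _ Az.
rewrite !mulmxBr -scalemxAr => /eqP; rewrite subr_eq0 subr_eq => /eqP H.
apply/andP; split; first by rewrite -/M H addrC.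
apply/forallP => j; rewrite mxE divr_ge0 //; last exact: ltW.
by apply: sumr_ge0.
Qed.
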